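(* Let $m/n\in(0,1/2)$. Then the set $\mathcal A_{m/n}$ of $m/n$-admissible integers has the same cardinality as the left Farey sequence $\mathrm{LFS}(m/n)$.
   Context: Rationals in lowest terms. For $h/k\in(0,1/2)$, $\mathrm{LFP}(h/k)$ is the element immediately preceding $h/k$ in the increasing list of rationals in $[0,1/2]$ with denominator at most $k$. $\mathrm{LFS}(m/n)=(0=u_1/v_1,u_2/v_2,\dots,u_\alpha/v_\alpha)$ where $u_\alpha/v_\alpha=\mathrm{LFP}(m/n)$ and $u_i/v_i=\mathrm{LFP}(u_{i+1}/v_{i+1})$ for $1\le i<\alpha$. $+_n$ is addition mod $n$; $\mathcal O_{m/n}[r,s]=\{r+_njm\colon0\le j\le K\}$ with $K\ge0$ least such that $r+_nKm=s$. An integer $k\in[0,m-1]$ is $m/n$-admissible if $\{k+1,\dots,m-1\}\cap\mathcal O_{m/n}[k,0]=\emptyset$. *)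

(* Defs.v *)
From HB Require Import structures.
From mathcomp Require Import all_boot all_order all_algebra.
Set Implicit Arguments. Unset Strict Implicit. Unset Printing Implicit Defensive.
Import Order.TTheory GRing.Theory Num.Theory.
Local Open Scope ring_scope.

(* All fractions a/b with 1 <= b <= k and 0 <= a <= b, restricted to [0,1/2].
   These are exactly the rationals in [0,1/2] with (reduced) denominator <= k. *)
Definition farey_cands (k : nat) : seq rat :=
  [seq r <- [seq (a%:R / b%:R : rat) | b <- iota 1 k, a <- iota 0 b.+1]
   | r <= 2%:R^-1].

(* LFP(q): the largest rational in [0,1/2] with denominator at most denq q
   which is strictly smaller than q (0 is always a candidate when q > 0). *)
Definition LFP (q : rat) : rat :=
  \big[Order.max/0]_(r <- farey_cands `|denq q|%N | r < q) r.

(* s = (u_1, ..., u_alpha) is the left Farey sequence LFS(q):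
   u_1 = 0, u_alpha = LFP(q), u_i = LFP(u_{i+1}), and the chain stops at
   the first 0 (u_i <> 0 for i > 1). Indices are 0-based here. *)
Definition is_LFS (q : rat) (s : seq rat) : Prop :=
  [/\ (0 < size s)%N,
      s`_0 = 0,
      last 0 s = LFP q,
      (forall i, (0 < i < size s)%N -> s`_i != 0)
    & (forall i, (i.+1 < size s)%N -> s`_i = LFP s`_i.+1)].

(* x \in O_{m/n}[r,0]: x = r +_n j m for some j <= K, where K is the least
   index with r +_n K m = 0; i.e. no earlier index i < j hits 0. *)
Definition in_orbit_to0 (m n r x : nat) : Prop :=
  exists j : nat, x = ((r + j * m) %% n)%N /\
    (forall i : nat, (i < j)%N -> ((r + i * m) %% n)%N <> 0%N).

Definition admissible (m n k : nat) : Prop :=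
  (k < m)%N /\
  (forall x : nat, (k < x < m)%N -> ~ in_orbit_to0 m n k x).

(* Main.v *)
Require Import Defs.
From mathcomp Require Import all_boot all_order all_algebra zify.
Import Order.TTheory GRing.Theory Num.Theory.

Lemma distinct_mod (m n u v : nat) : coprime m n -> u < m -> v < m ->
  u * n %% m = v * n %% m -> u = v.
Proof.
move=> cop.
wlog le: u v / v <= u.
  move=> W hu hv E; case: (leqP v u) => h; first exact: W.
  by apply/esym/W => //; apply: ltnW.
move=> hu hv /eqP E.
rewrite eqn_mod_dvd ?leq_mul2r ?le ?orbT // -mulnBl Gauss_dvdl // in E.
have : u - v < m by lia.
move: E; case: (u - v =P 0) => [h|h]; first by lia.
move=> d lt; have := dvdn_leq _ d; lia.
Qed.

Lemma surj_mod (m n k : nat) : coprime m n -> k < m ->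
  exists2 u, u < m & u * n %% m = k.
Proof.
move=> cop hk.
have U : uniq [seq u * n %% m | u <- iota 0 m].
  rewrite map_inj_in_uniq ?iota_uniq // => u v; rewrite !mem_iota /= => hu hv.
  exact: distinct_mod.
have S : {subset [seq u * n %% m | u <- iota 0 m] <= iota 0 m}.
  move=> x /mapP [u _ ->]; rewrite mem_iota /= ltn_pmod //; lia.
have [_ E] := uniq_min_size U S (eq_leq (esym (size_map _ _))).
have : k \in iota 0 m by rewrite mem_iota.
by rewrite -E => /mapP [u]; rewrite mem_iota => /= hu ->; exists u.
Qed.

Lemma key_id (m n a b u : nat) : 0 < m -> m * b = a * n + 1 -> u < a ->
  a * (u * n %% m) + u = m * (u * b %% a).
Proof.
move=> m0 E ua.
have a0 : 0 < a by lia.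
set R := u * n %% m; set Q := u * n %/ m; set r := u * b %% a; set q := u * b %/ a.
have e1 : u * n = Q * m + R by rewrite (divn_eq (u*n) m).
have e2 : u * b = q * a + r by rewrite (divn_eq (u*b) a).
have hR : R < m by rewrite ltn_pmod.
have hr : r < a by rewrite ltn_pmod.
have e3 : m * (u * b) = u * (a * n) + u by rewrite mulnCA E; lia.
rewrite e2 in e3.
have e4 : a * R + u + m * a * Q = m * r + m * a * q.
  have : u * (a * n) = a * (Q * m + R) by rewrite mulnCA e1.
  nia.
have hQ : Q = q.
  case: (ltngtP Q q) => // h.
  - have : Q.+1 <= q := h. nia.
  - have : q.+1 <= Q := h. nia.
subst Q; lia.
Qed.

Arguments distinct_mod {m n u v}.
Arguments key_id {m n a b u}.

Definition recb (m n u : nat) := all (fun v => v * n %% m < u * n %% m) (iota 0 u).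

Lemma rec_eq (m n a b u : nat) : 0 < m -> a < m -> coprime a b -> m * b = a * n + 1 ->
  u < a -> recb m n u = recb a b u.
Proof.
move=> m0 am cab E ua; apply: eq_in_all => v; rewrite mem_iota /= add0n => vu.
have k1 := key_id m0 E ua.
have k2 := key_id m0 E (ltn_trans vu ua).
have ne : v * b %% a != u * b %% a.
  apply/eqP => h; have := distinct_mod cab (ltn_trans vu ua) ua h; lia.
have a0 : 0 < a by lia.
move: k1 k2 ne; set Xu := u * n %% m; set Xv := v * n %% m.
set Yu := u * b %% a; set Yv := v * b %% a => k1 k2 ne.
case: (ltngtP Yv Yu) ne => // h _.
- have h' : m * Yv.+1 <= m * Yu by rewrite leq_mul2l h orbT.
  rewrite mulnS in h'.
  have : a * Xv < a * Xu by lia.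
  by rewrite ltn_pmul2l // => ->.
- have h' : m * Yu.+1 <= m * Yv by rewrite leq_mul2l h orbT.
  rewrite mulnS in h'.
  have : a * Xu < a * Xv by lia.
  rewrite ltn_pmul2l // => h2; apply/negbTE; rewrite -leqNgt; exact: ltnW.
Qed.

Lemma count_rec (m n a b : nat) : 0 < m -> a < m -> coprime a b ->
  coprime m n -> m * b = a * n + 1 ->
  count (recb m n) (iota 0 m) = (count (recb a b) (iota 0 a)).+1.
Proof.
move=> m0 am cab cmn E.
have b0 : 0 < b by nia.
have ma : a * n %% m = m.-1.
  have : a * n = (b.-1) * m + m.-1 by nia.
  move=> ->; rewrite modnMDl modn_small //; lia.
have -> : iota 0 m = iota 0 a ++ a :: iota a.+1 (m - a).-1.
  have {1}-> : m = a + (1 + (m - a).-1) by lia.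
  by rewrite !iotaD add0n addn1.
rewrite count_cat /=.
rewrite (eq_in_count (a2 := recb a b)); last first.
  by move=> u; rewrite mem_iota /= => hu; apply: rec_eq.
have -> : recb m n a.
  apply/allP => v; rewrite mem_iota /= ma => hv.
  have : v * n %% m < m by rewrite ltn_pmod.
  have : v * n %% m != a * n %% m.
    by apply/eqP => h; have := distinct_mod cmn (ltn_trans hv am) am h; lia.
  rewrite ma; lia.
have -> : count (recb m n) (iota a.+1 (m - a).-1) = 0.
  rewrite (eq_in_count (a2 := pred0)) ?count_pred0 //.
  move=> u; rewrite mem_iota => /andP [h1 h2] /=.
  apply/negbTE/allPn; exists a; first by rewrite mem_iota; lia.
  rewrite ma -leqNgt; have : u * n %% m < m by rewrite ltn_pmod.
  lia.
by rewrite /= addn0 addn1.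
Qed.


Lemma mod_help m y z p q : y + p * m = q * m + z -> z < m -> y %% m = z.
Proof.
move=> e zm; rewrite -(modnMDl p y) addnC e modnMDl modn_small //.
Qed.

Lemma adm_rec (m n u : nat) : 0 < m -> coprime m n -> m < n -> u < m ->
  admissible m n (u * n %% m) <-> recb m n u.
Proof.
move=> m0 cop mn um.
set k := u * n %% m; set Q := u * n %/ m.
have kE : u * n = Q * m + k by rewrite /Q /k -divn_eq.
have km : k < m by rewrite ltn_pmod.
have F1 : forall j t, k + j * m = t * n -> u <= t.
  move=> j t e; rewrite leqNgt; apply/negP => tu.
  have h : t * n %% m = u * n %% m.
    by rewrite -e -/k (addnC k) modnMDl modn_small.
  have := distinct_mod cop (ltn_trans tu um) um h; lia.
split.
- case=> _ H; apply/negPn/negP => /allPn [v]; rewrite mem_iota /= add0n => vu.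
  rewrite -leqNgt -/k => kv.
  have nek : v * n %% m != k.
    by apply/eqP => h; have := distinct_mod cop (ltn_trans vu um) um h; lia.
  have kv' : k < v * n %% m by rewrite ltn_neqAle eq_sym nek.
  have vnm : v * n %% m < m by rewrite ltn_pmod.
  set t := u - v.
  have uvt : u * n = v * n + t * n by rewrite -mulnDl /t; congr (_ * _); lia.
  have t1 : 1 <= t by lia.
  have tn : n <= t * n by rewrite leq_pmull.
  set L := t * n.
  set q := (L - k - 1) %/ m; set r := (L - k - 1) %% m.
  have qE : L - k - 1 = q * m + r by rewrite /q /r -divn_eq.
  have rm : r < m by rewrite ltn_pmod.
  set j := q.+1.
  set x := k + j * m - L.
  have jm : j * m = q * m + m by rewrite /j mulSn addnC.
  have xE : k + j * m = t * n + x by rewrite /x /L; lia.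
  have xm : x < m by rewrite /x /L; lia.
  have xv : x = v * n %% m.
    apply/esym/(@mod_help m _ _ j Q) => //; lia.
  apply: (H x); first by rewrite xv kv' vnm.
  exists j; split.
    by rewrite xE modnMDl modn_small //; lia.
  move=> i ij hi.
  have e : k + i * m = ((k + i * m) %/ n) * n by rewrite {1}(divn_eq (k + i * m) n) hi addn0.
  have := F1 _ _ e => ut.
  have h1 : u * n <= (k + i * m) %/ n * n by rewrite leq_mul2r ut orbT.
  have h2 : i * m <= q * m by rewrite leq_mul2r; apply/orP; right; rewrite -ltnS.
  lia.
- move=> R; split => // x /andP [kx xm] [j [xE hj]].
  set t := (k + j * m) %/ n.
  have e : k + j * m = t * n + x by rewrite xE /t -divn_eq.
  case: (posnP t) => t0.
    rewrite t0 mul0n add0n in e.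
    case: (posnP j) => j0; first by move: e; rewrite j0 mul0n addn0; lia.
    have : m <= j * m by rewrite leq_pmull.
    lia.
  case: (leqP t u) => tu.
    set v := u - t.
    have uvt : u * n = v * n + t * n by rewrite -mulnDl /v; congr (_ * _); lia.
    have xv : x = v * n %% m.
      apply/esym/(@mod_help m _ _ j Q) => //; lia.
    move/allP: R => /(_ v); rewrite mem_iota /= add0n -/k -xv.
    have : v < u by lia.
    move=> -> /(_ isT); lia.
  have h1 : u.+1 * n <= t * n by rewrite leq_mul2r tu orbT.
  have h2 : Q < j.
    rewrite -(ltn_pmul2r m0); rewrite mulSn in h1.
    have : n > m by [].
    lia.
  have := hj Q h2.
  by rewrite addnC -kE modnMl.
Qed.


Lemma denq_frac (m n : nat) : coprime m n -> (0 < n)%N ->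
  `|denq (m%:R / n%:R : rat)%R|%N = n.
Proof.
move=> cop n0.
have := @coprimeq_den (Posz m) (Posz n).
rewrite !absz_nat => /(_ cop).
have -> : ((Posz m)%:~R / (Posz n)%:~R : rat)%R = (m%:R / n%:R)%R by [].
move=> ->; case: (Posz n =P 0) => [h|_]; first by move: h n0 => [->].
by rewrite absz_nat.
Qed.

Lemma lt_frac (c d m n : nat) : (0 < d)%N -> (0 < n)%N ->
  ((c%:R / d%:R : rat) < m%:R / n%:R)%R = (c * n < m * d)%N.
Proof.
move=> d0 n0.
rewrite ltr_pdivrMr ?ltr0n // mulrAC ltr_pdivlMr ?ltr0n //.
by rewrite -!natrM ltr_nat.
Qed.

Lemma le_frac (c d m n : nat) : (0 < d)%N -> (0 < n)%N ->
  ((c%:R / d%:R : rat) <= m%:R / n%:R)%R = (c * n <= m * d)%N.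
Proof.
move=> d0 n0.
rewrite ler_pdivrMr ?ltr0n // mulrAC ler_pdivlMr ?ltr0n //.
by rewrite -!natrM ler_nat.
Qed.

Lemma farey_ineq (a b c d m n : nat) : (0 < d)%N -> (0 < b)%N -> (d <= n)%N ->
  m * b = a * n + 1 -> (c * n < m * d)%N -> (c * b <= a * d)%N.
Proof.
move=> d0 b0 dn E h.
rewrite leqNgt; apply/negP => h2.
have h3 : (n * (a * d).+1 <= n * (c * b))%N by rewrite leq_mul2l h2 orbT.
have h4 : (b * (c * n).+1 <= b * (m * d))%N by rewrite leq_mul2l h orbT.
have e1 : b * (m * d) = (a * n + 1) * d by rewrite mulnCA mulnA E.
rewrite e1 mulnS in h4. rewrite mulnS in h3.
have e2 : n * (c * b) = b * (c * n) by lia.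
have e3 : (a * n + 1) * d = n * (a * d) + d by lia.
lia.
Qed.

Lemma bigmax_ub (s : seq rat) (P : pred rat) (x : rat) :
  x \in s -> P x -> (x <= \big[Order.max/0]_(r <- s | P r) r)%R.
Proof.
elim: s => // y s IH; rewrite inE big_cons => /orP [/eqP <-|xs] Px.
  by rewrite Px le_max lexx.
case: (P y); last exact: IH.
by rewrite le_max IH ?orbT.
Qed.

Lemma LFP_eq (m n a b : nat) : (0 < m)%N -> coprime m n -> (0 < b)%N -> (b <= n)%N ->
  (2 * a < b)%N -> m * b = a * n + 1 -> LFP (m%:R / n%:R)%R = (a%:R / b%:R)%R.
Proof.
move=> m0 cop b0 bn ab E.
have n0 : (0 < n)%N by lia.
rewrite /LFP denq_frac //.
apply/le_anti/andP; split.
  rewrite big_seq_cond; apply: (big_ind (fun x => x <= a%:R / b%:R)%R).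
  - by rewrite divr_ge0 ?ler0n.
  - by move=> x y hx hy; rewrite ge_max hx hy.
  move=> r /andP [+ hr]; rewrite mem_filter => /andP [_ /allpairsPdep [d [c [hd hc er]]]]; subst r.
  move: hd hc hr; rewrite !mem_iota => /andP [d0 dn] /andP [_ cd] /=.
  rewrite lt_frac // le_frac // => h.
  apply: (@farey_ineq a b c d m n) => //; lia.
apply: bigmax_ub; last by rewrite lt_frac //; lia.
rewrite mem_filter; apply/andP; split.
  have -> : (2%:R^-1 : rat) = (1%:R / 2%:R)%R by rewrite div1r.
  rewrite le_frac //; lia.
apply/allpairsPdep; exists b, a; rewrite !mem_iota; split => //; lia.
Qed.


Lemma main_ind (m : nat) : forall n, 0 < m -> coprime m n -> 2 * m < n ->
  exists s : seq rat, is_LFS (m%:R / n%:R)%R s /\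
     size s = count (recb m n) (iota 0 m).
Proof.
elim/ltn_ind: m => m IH n m0 cmn mn.
have mm : m.-1 < m by rewrite ltn_predL.
have [a am an] := @surj_mod m n m.-1 cmn mm.
set b := (a * n %/ m).+1.
have E : m * b = a * n + 1.
  have := divn_eq (a * n) m; rewrite an /b; lia.
have b0 : 0 < b by [].
have bn : b <= n.
  rewrite -(leq_pmul2l m0) E.
  have : a * n <= m.-1 * n by rewrite leq_mul2r; lia.
  have : m * n = m.-1 * n + n by rewrite -{1}(prednK m0) mulSn addnC.
  lia.
have ab : 2 * a < b.
  rewrite -(ltn_pmul2l m0) E.
  have : a * (2 * m) <= a * n by rewrite leq_mul2l; lia.
  lia.
have cab : coprime a b.
  rewrite /coprime -dvdn1.
  have -> : 1 = m * b - a * n by lia.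
  by apply: dvdn_sub; [apply: dvdn_mull; exact: dvdn_gcdr | apply: dvdn_mulr; exact: dvdn_gcdl].
have LF := @LFP_eq m n a b m0 cmn b0 bn ab E.
rewrite (@count_rec m n a b m0 am cab cmn E).
case: (posnP a) => a0.
  exists ([:: 0%R] : seq rat); split; last by rewrite a0.
  split; [by []|by []|by rewrite /= LF a0 mul0r|by move=> i /=; lia|by move=> i /=; lia].
have [s' [[s0 s'0 sl snz sch] ss]] := IH a am b a0 cab ab.
exists (rcons s' (a%:R / b%:R)%R); split; last by rewrite size_rcons ss.
have anz : (a%:R / b%:R : rat)%R != 0%R.
  by rewrite mulf_neq0 // ?invr_eq0 pnatr_eq0 -lt0n.
split.
- by rewrite size_rcons.
- by rewrite nth_rcons s0.
- by rewrite last_rcons LF.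
- move=> i; rewrite size_rcons nth_rcons => /andP [i0 iS].
  case: ltnP => h; first by apply: snz; apply/andP.
  by have -> : i == size s' by rewrite eqn_leq h -ltnS iS.
- move=> i; rewrite size_rcons ltnS => h.
  rewrite !nth_rcons h.
  case: ltnP => h2; first exact: sch.
  have ei : i.+1 = size s' by apply/eqP; rewrite eqn_leq h h2.
  by rewrite ei eqxx -sl -nth_last -ei.
Qed.


Theorem corollary2p20 (m n : nat) :
  (0 < m)%N -> coprime m n -> (2 * m < n)%N ->
  exists s : seq rat,
    is_LFS ((m%:R / n%:R)%R) s /\
    exists A : seq nat,
      [/\ uniq A, (forall k : nat, k \in A <-> admissible m n k)
        & size A = size s].
Proof.
move=> m0 cmn mn.
have mn' : m < n by lia.
have [s [Hs ss]] := @main_ind m n m0 cmn mn.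
exists s; split => //.
exists [seq u * n %% m | u <- iota 0 m & recb m n u]; split.
- rewrite map_inj_in_uniq ?filter_uniq ?iota_uniq //.
  move=> u v; rewrite !mem_filter !mem_iota /= => /andP [_ hu] /andP [_ hv].
  exact: distinct_mod.
- move=> k; split.
    move=> /mapP [u]; rewrite mem_filter mem_iota /= => /andP [ru hu] ->.
    by apply/(@adm_rec m n u m0 cmn mn' hu).
  move=> H.
  have km : k < m by case: H.
  have [u um uk] := @surj_mod m n k cmn km.
  rewrite -uk in H *; apply: map_f.
  by rewrite mem_filter mem_iota /= um andbT; apply/(@adm_rec m n u m0 cmn mn' um).
- by rewrite size_map size_filter ss.
Qed.
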